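(* Let $l$ be a symmetric function on $\Omega\times\Omega$ and $v_1,\ldots,v_p$ functions on $\Omega$; let $\mathcal{X}=\{x_1,\ldots,x_n\}\subset\Omega$ be such that $\mathbf{V}=[v_j(x_i)]\in\mathbb{R}^{n\times p}$ has full column rank and $\widetilde{\mathbf{L}}=(\mathbf{I}-\mathbf{Q}\mathbf{Q}^\top)\mathbf{L}(\mathbf{I}-\mathbf{Q}\mathbf{Q}^\top)$ is positive semi-definite, where $\mathbf{L}=[l(x_i,x_j)]$ and $\mathbf{Q}$ is an orthonormal basis of the column span of $\mathbf{V}$. For $\varepsilon>0$ consider GP regression with prior covariance $k_\varepsilon(x,y)=l(x,y)+\varepsilon^{-1}\sum_{i=1}^p v_i(x)v_i(y)$, observations $\mathbf{y}$ at $\mathcal{X}$ and noise variance $\sigma^2>0$, with predictive variance $\mathrm{Var}_\varepsilon(f(x)\mid\mathbf{y})=k_\varepsilon(x,x)-\mathbf{k}^\varepsilon_{x,\mathcal{X}}(\mathbf{K}_\varepsilon+\sigma^2\mathbf{I})^{-1}(\mathbf{k}^\varepsilon_{x,\mathcal{X}})^\top$, where $\mathbf{k}^\varepsilon_{x,\mathcal{X}}=[k_\varepsilon(x,x_i)]_i$ and $\mathbf{K}_\varepsilon=[k_\varepsilon(x_i,x_j)]$. Then for every $x\in\Omega$, as $\varepsilon\to0$, $$\mathrm{Var}_\varepsilon(f(x)\mid\mathbf{y})=l(x,x)-(\mathbf{l}_{x,\mathcal{X}}\ \ \mathbf{v}_x)\begin{pmatrix}\mathbf{L}+\sigma^2\mathbf{I}&\mathbf{V}\\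 \mathbf{V}^\top&\mathbf{0}\end{pmatrix}^{-1}\begin{pmatrix}\mathbf{l}_{x,\mathcal{X}}^\top\\ \mathbf{v}_x^\top\end{pmatrix}+O(\varepsilon),$$ where $\mathbf{l}_{x,\mathcal{X}}=[l(x,x_1),\ldots,l(x,x_n)]$ and $\mathbf{v}_x=[v_1(x),\ldots,v_p(x)]$.
   Context: In particular the predictive variance does not diverge as $\varepsilon\to0$ even though the prior variance along the functions $v_i$ tends to infinity. *)

(* Defs.v *)
From mathcomp Require Import all_boot all_order all_algebra.
Set Implicit Arguments. Unset Strict Implicit. Unset Printing Implicit Defensive.
Import Order.TTheory GRing.Theory Num.Theory.
Local Open Scope ring_scope.

Definition psd (R : realFieldType) (n : nat) (A : 'M[R]_n) : Prop :=
  forall u : 'cV[R]_n, 0 <= (u^T *m A *m u) 0 0.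

Definition gramL (R : realFieldType) (Omega : Type) (n : nat)
  (l : Omega -> Omega -> R) (xs : 'I_n -> Omega) : 'M[R]_n :=
  \matrix_(i, j) l (xs i) (xs j).

Definition basisV (R : realFieldType) (Omega : Type) (n p : nat)
  (v : 'I_p -> Omega -> R) (xs : 'I_n -> Omega) : 'M[R]_(n, p) :=
  \matrix_(i, j) v j (xs i).

Definition keps (R : realFieldType) (Omega : Type) (p : nat)
  (l : Omega -> Omega -> R) (v : 'I_p -> Omega -> R) (eps : R) (x y : Omega) : R :=
  l x y + eps^-1 * \sum_(i < p) v i x * v i y.

Definition gp_var (R : realFieldType) (Omega : Type) (n : nat)
  (k : Omega -> Omega -> R) (xs : 'I_n -> Omega) (s2 : R) (x : Omega) : R :=
  let kx : 'rV[R]_n := \row_i k x (xs i) in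
  let K : 'M[R]_n := \matrix_(i, j) k (xs i) (xs j) in
  k x x - (kx *m invmx (K + s2%:M) *m kx^T) 0 0.

Definition limit_var (R : realFieldType) (Omega : Type) (n p : nat)
  (l : Omega -> Omega -> R) (v : 'I_p -> Omega -> R) (xs : 'I_n -> Omega)
  (s2 : R) (x : Omega) : R :=
  let L := gramL l xs in
  let V := basisV v xs in
  let w : 'rV[R]_(n + p) := row_mx (\row_i l x (xs i)) (\row_j v j x) in
  let M : 'M[R]_(n + p) := block_mx (L + s2%:M) V V^T 0 in
  l x x - (w *m invmx M *m w^T) 0 0.

(* Main.v *)
Require Import Defs.
From mathcomp Require Import all_boot all_order all_algebra.
From mathcomp Require Import ring lra.
Import Order.TTheory GRing.Theory Num.Theory.
Set Implicit Arguments. Unset Strict Implicit.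
Local Open Scope ring_scope.


Definition nrm1 (R : realFieldType) m (y : 'cV[R]_m) : R := \sum_i `|y i 0|.

Lemma nrm1_ge0 (R : realFieldType) m (y : 'cV[R]_m) : 0 <= nrm1 y.
Proof. by apply: sumr_ge0 => i _. Qed.

Lemma coord_le (R : realFieldType) m (y : 'cV[R]_m) j : `|y j 0| <= nrm1 y.
Proof.
rewrite /nrm1 (bigD1 j) //= lerDl; by apply: sumr_ge0.
Qed.

Lemma row_bound (R : realFieldType) m (a : 'rV[R]_m) (y : 'cV[R]_m) :
  `|(a *m y) 0 0| <= (\sum_j `|a 0 j|) * nrm1 y.
Proof.
rewrite !mxE mulr_suml; apply: le_trans (ler_norm_sum _ _ _) _.
apply: ler_sum => j _; rewrite normrM; apply: ler_wpM2l => //; exact: coord_le.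
Qed.

Lemma mat_bound (R : realFieldType) m k (B : 'M[R]_(k, m)) (y : 'cV[R]_m) :
  nrm1 (B *m y) <= (\sum_i \sum_j `|B i j|) * nrm1 y.
Proof.
rewrite /nrm1 mulr_suml; apply: ler_sum => i _.
have H := row_bound (row i B) y; rewrite -row_mul mxE in H.
have E : \sum_j `|row i B 0 j| = \sum_j `|B i j| by apply: eq_bigr => j _; rewrite mxE.
by rewrite E in H.
Qed.

Lemma nrm1_eq0 (R : realFieldType) m (y : 'cV[R]_m) : nrm1 y = 0 -> y = 0.
Proof.
move=> /eqP; rewrite psumr_eq0 // => /allP H.
apply/matrixP => i j; rewrite (ord1 j) mxE; apply/eqP; rewrite -normr_eq0.
by apply: H; rewrite mem_index_enum.
Qed.

Lemma ker_unit (R : realFieldType) m (A : 'M[R]_m) :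
  (forall y : 'cV[R]_m, A *m y = 0 -> y = 0) -> A \in unitmx.
Proof.
move=> H; rewrite -unitmx_tr -row_free_unit; apply: inj_row_free => u Hu.
have: A *m u^T = 0 by rewrite -[A]trmxK -trmx_mul Hu trmx0.
by move/H => /(congr1 trmx); rewrite trmxK trmx0.
Qed.


Lemma M_unit (R : realFieldType) n p (L : 'M[R]_n) (V Q : 'M[R]_(n, p)) s2 :
  \rank V = p -> Q^T *m Q = 1%:M -> (Q^T == V^T)%MS ->
  psd ((1%:M - Q *m Q^T) *m L *m (1%:M - Q *m Q^T)) -> 0 < s2 ->
  block_mx (L + s2%:M) V V^T 0 \in unitmx.
Proof.
move=> rV QQ /andP[sQV _] Hpsd s2p; apply: ker_unit => y.
rewrite -[y]vsubmxK mul_block_col mul0mx addr0 -col_mx0.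
set a := usubmx y; set b := dsubmx y.
move=> /eq_col_mx [H1 H2].
have Qa : Q^T *m a = 0 by case/submxP: sQV => D ->; rewrite -mulmxA H2 mulmx0.
set P := 1%:M - Q *m Q^T.
have Pa : P *m a = a by rewrite mulmxBl mul1mx -mulmxA Qa mulmx0 subr0.
have PT : P^T = P by rewrite /P linearB /= trmx1 trmx_mul trmxK.
have aPa : (a^T *m P *m L *m P *m a) = a^T *m L *m a.
  by rewrite -!mulmxA Pa !mulmxA -[a^T *m P]trmxK trmx_mul trmxK PT Pa.
have Hg := Hpsd a; rewrite !mulmxA aPa in Hg.
have HA : a^T *m (L + s2%:M) *m a = 0.
  have : a^T *m ((L + s2%:M) *m a + V *m b) = 0 by rewrite H1 mulmx0.
  rewrite mulmxDr mulmxA mulmxA.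
  have -> : a^T *m V = 0 by rewrite -[a^T *m V]trmxK trmx_mul trmxK H2 trmx0.
  by rewrite mul0mx addr0.
have Hsum : (a^T *m a) 0 0 = \sum_i a i 0 ^+ 2.
  by rewrite mxE; apply: eq_bigr => i _; rewrite mxE expr2.
have Hs : (a^T *m a) 0 0 = 0.
  have E : a^T *m (L + s2%:M) *m a = a^T *m L *m a + s2 *: (a^T *m a).
    by rewrite mulmxDr mulmxDl mul_mx_scalar -scalemxAl.
  move: HA; rewrite E; set t1 := a^T *m L *m a; set t2 := a^T *m a.
  move=> /(congr1 (fun M : 'M[R]_1 => M 0 0)) HH.
  have {}HH : t1 0 0 + s2 * t2 0 0 = 0 by move: HH; rewrite !mxE.
  apply/eqP; rewrite eq_le; apply/andP; split; last by rewrite Hsum sumr_ge0 // => i _; rewrite sqr_ge0.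
  have : s2 * (a^T *m a) 0 0 <= 0.
    have -> : s2 * (a^T *m a) 0 0 = - (a^T *m L *m a) 0 0 by apply/eqP; rewrite -subr_eq0 opprK addrC HH.
    by rewrite oppr_le0.
  by rewrite pmulr_rle0.
have a0 : a = 0.
  apply/matrixP => i j; rewrite (ord1 j) [RHS]mxE.
  move: Hs; rewrite Hsum => /eqP; rewrite psumr_eq0 => [/allP Hi|i' _]; last exact: sqr_ge0.
  by apply/eqP; rewrite -(sqrf_eq0 (a i 0)); apply: Hi; rewrite mem_index_enum.
have b0 : b = 0.
  have rf : row_free V^T by rewrite /row_free mxrank_tr rV.
  have : b^T *m V^T = 0 by rewrite -trmx_mul -trmx0; congr trmx; rewrite -H1 a0 mulmx0 add0r.
  move/eqP; rewrite mulmx_free_eq0 // => /eqP /(congr1 trmx); by rewrite trmxK trmx0.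
by rewrite a0 b0 col_mx0.
Qed.

Lemma gp_alg (R : realFieldType) n p (A : 'M[R]_n) (V : 'M[R]_(n, p))
  (lx : 'rV[R]_n) (vx : 'rV[R]_p) (lxx eps : R) :
  0 < eps ->
  (forall y : 'cV[R]_(n + p), block_mx A V V^T (- eps%:M) *m y = 0 -> y = 0) ->
  exists z, block_mx A V V^T (- eps%:M) *m z = (row_mx lx vx)^T /\
   lxx + eps^-1 * (vx *m vx^T) 0 0
     - ((lx + eps^-1 *: (vx *m V^T)) *m invmx (A + eps^-1 *: (V *m V^T))
         *m (lx + eps^-1 *: (vx *m V^T))^T) 0 0
   = lxx - (row_mx lx vx *m z) 0 0.
Proof.
move=> e0 Hker.
set t := eps^-1; set Kt := A + t *: (V *m V^T); set kx := lx + t *: (vx *m V^T).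
have et : eps * t = 1 by rewrite /t mulfV // gt_eqF.
have Ku : Kt \in unitmx.
  apply: ker_unit => y Hy; have := Hker (col_mx y (t *: (V^T *m y))).
  rewrite mul_block_col.
  have -> : A *m y + V *m (t *: (V^T *m y)) = 0.
    by rewrite -Hy /Kt mulmxDl -!scalemxAr -scalemxAl mulmxA.
  have -> : V^T *m y + - eps%:M *m (t *: (V^T *m y)) = 0.
    by rewrite mulNmx mul_scalar_mx scalerA et scale1r subrr.
  by rewrite col_mx0 => /(_ erefl) /eqP; rewrite col_mx_eq0 => /andP [/eqP].
set X := invmx Kt.
have KX : Kt *m X = 1%:M by rewrite mulmxV.
have kxT : kx^T = lx^T + t *: (V *m vx^T) by rewrite /kx linearD linearZ /= trmx_mul trmxK.
exists (col_mx (X *m kx^T) (t *: (V^T *m X *m kx^T - vx^T))).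
split.
  rewrite mul_block_col tr_row_mx; congr col_mx.
    have -> : A *m (X *m kx^T) + V *m (t *: (V^T *m X *m kx^T - vx^T))
       = Kt *m X *m kx^T - t *: (V *m vx^T).
      rewrite /Kt !mulmxDl -!scalemxAr -!scalemxAl mulmxBr scalerBr !mulmxA addrA.
      by [].
    by rewrite KX mul1mx kxT addrK.
  rewrite mulNmx mul_scalar_mx scalerA et scale1r.
  by rewrite opprB mulmxA addrC subrK.
rewrite mul_row_col.
have -> : lx *m (X *m kx^T) + vx *m (t *: (V^T *m X *m kx^T - vx^T))
   = kx *m X *m kx^T - t *: (vx *m vx^T).
  have kxE : kx = lx + t *: (vx *m V^T) by [].
  rewrite {3}kxE mulmxDl -!scalemxAr -!scalemxAl mulmxBr scalerBr !mulmxA addrA.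
  by rewrite mulmxDl -scalemxAl.
rewrite !mxE.
by rewrite opprB addrA [lxx + _ - _]addrC addrA [_ + lxx]addrC.
Qed.

Lemma nrm1Z (R : realFieldType) m (k : R) (y : 'cV[R]_m) : nrm1 (k *: y) = `|k| * nrm1 y.
Proof. rewrite /nrm1 mulr_sumr; apply: eq_bigr => i _; by rewrite mxE normrM. Qed.

Lemma nrm1D (R : realFieldType) m (a b : 'cV[R]_m) : nrm1 (a + b) <= nrm1 a + nrm1 b.
Proof. rewrite /nrm1 -big_split; apply: ler_sum => i _; rewrite mxE; exact: ler_normD. Qed.

Lemma pert_eq (R : realFieldType) m (M E : 'M[R]_m) (eps : R) (y r : 'cV[R]_m) :
  M \in unitmx -> (M - eps *: E) *m y = r ->
  y = invmx M *m r + eps *: (invmx M *m E *m y).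
Proof.
move=> Mu H; have : M *m y = r + eps *: (E *m y).
  by rewrite -H mulmxBl -scalemxAl subrK.
move=> /(congr1 (mulmx (invmx M))).
by rewrite mulKmx // mulmxDr -scalemxAr mulmxA.
Qed.

Lemma pert_bound (R : realFieldType) m (M E : 'M[R]_m) (eps : R) (y r : 'cV[R]_m) :
  M \in unitmx -> 0 < eps -> eps * (\sum_i \sum_j `|(invmx M *m E) i j|) <= 1/2 ->
  (M - eps *: E) *m y = r -> nrm1 y <= 2 * nrm1 (invmx M *m r).
Proof.
move=> Mu e0 ec /(pert_eq Mu) Hy.
set c := \sum_i \sum_j `|(invmx M *m E) i j|.
have H1 : nrm1 y <= nrm1 (invmx M *m r) + eps * c * nrm1 y.
  rewrite [X in nrm1 X <= _]Hy; apply: le_trans (nrm1D _ _) _.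
  rewrite lerD2l nrm1Z gtr0_norm // -mulrA ler_wpM2l ?(ltW e0) //.
  exact: mat_bound.
have c0 : 0 <= c by apply: sumr_ge0 => i _; apply: sumr_ge0.
have H2 : eps * c * nrm1 y <= 1/2 * nrm1 y by rewrite ler_wpM2r // nrm1_ge0.
have : nrm1 y <= nrm1 (invmx M *m r) + 1/2 * nrm1 y by apply: le_trans H1 _; rewrite lerD2l.
move: (nrm1_ge0 y) (nrm1_ge0 (invmx M *m r)) => ??. lra.
Qed.

Lemma pert_ker (R : realFieldType) m (M E : 'M[R]_m) (eps : R) (y : 'cV[R]_m) :
  M \in unitmx -> 0 < eps -> eps * (\sum_i \sum_j `|(invmx M *m E) i j|) <= 1/2 ->
  (M - eps *: E) *m y = 0 -> y = 0.
Proof.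
move=> Mu e0 ec H; have := pert_bound Mu e0 ec H; rewrite mulmx0.
have -> : nrm1 (0 : 'cV[R]_m) = 0 by rewrite /nrm1 big1 // => i _; rewrite mxE normr0.
rewrite mulr0 => H0; apply: nrm1_eq0; apply/eqP; by rewrite eq_le H0 nrm1_ge0.
Qed.

Theorem mainTheorem8 (R : realFieldType) (Omega : Type) (n p : nat)
  (l : Omega -> Omega -> R) (v : 'I_p -> Omega -> R) (xs : 'I_n -> Omega)
  (s2 : R) :
  (forall x y, l x y = l y x) ->
  \rank (basisV v xs) = p ->
  (exists Q : 'M[R]_(n, p),
      Q^T *m Q = 1%:M /\ (Q^T == (basisV v xs)^T)%MS /\
      psd ((1%:M - Q *m Q^T) *m gramL l xs *m (1%:M - Q *m Q^T))) ->
  0 < s2 ->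
  forall x : Omega,
  exists C : R, exists delta : R, 0 < delta /\
    forall eps : R, 0 < eps -> eps < delta ->
      `| gp_var (keps l v eps) xs s2 x - limit_var l v xs s2 x | <= C * eps.
Proof.
move=> lsym rV [Q [QQ [QV Hpsd]]] s2p x.
set L := gramL l xs; set V := basisV v xs; set A := L + s2%:M.
set M : 'M[R]_(n + p) := block_mx A V V^T 0.
have Mu : M \in unitmx by apply: (M_unit rV QQ QV Hpsd s2p).
set E : 'M[R]_(n + p) := block_mx 0 0 0 1%:M.
set B := invmx M *m E.
set c := \sum_i \sum_j `|B i j|.
have c0 : 0 <= c by apply: sumr_ge0 => i _; apply: sumr_ge0.
set lx : 'rV[R]_n := \row_i l x (xs i); set vx : 'rV[R]_p := \row_j v j x.
set w := row_mx lx vx.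
set z0 := invmx M *m w^T.
set a := w *m B.
exists ((\sum_j `|a 0 j|) * (2 * nrm1 z0)), (1 / (2 * c + 2)).
have c2 : 0 < 2 * c + 2 by lra.
split; first by rewrite divr_gt0.
move=> eps e0 ed.
have ec : eps * c <= 1/2.
  have h : eps * (2 * c + 2) < 1.
    by rewrite -ltr_pdivlMr.
  lra.
have NE : M - eps *: E = block_mx A V V^T (- eps%:M).
  by rewrite /M /E scale_block_mx !scaler0 scalemx1 opp_block_mx add_block_mx !oppr0 !addr0 add0r.
have Hker : forall y : 'cV[R]_(n + p), block_mx A V V^T (- eps%:M) *m y = 0 -> y = 0.
  by move=> y; rewrite -NE; apply: pert_ker.
have [z [Hz Hgp]] := gp_alg lx vx (l x x) e0 Hker.
have Hgv : gp_var (keps l v eps) xs s2 x = l x x - (w *m z) 0 0.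
  rewrite -Hgp /gp_var.
  have -> : \row_i keps l v eps x (xs i) = lx + eps^-1 *: (vx *m V^T).
    by apply/matrixP => i j; rewrite !mxE; congr (_ + _); congr (_ * _); apply: eq_bigr => k _; rewrite !mxE.
  have -> : \matrix_(i, j) keps l v eps (xs i) (xs j) + s2%:M = A + eps^-1 *: (V *m V^T).
    apply/matrixP => i j; rewrite !mxE /keps -!addrA; congr (_ + _); rewrite addrC; congr (_ + _).
    by congr (_ * _); apply: eq_bigr => k _; rewrite !mxE.
  rewrite /keps; congr (_ - _); congr (_ + _); congr (_ * _).
  by rewrite mxE; apply: eq_bigr => k _; rewrite !mxE.
have Hlv : limit_var l v xs s2 x = l x x - (w *m z0) 0 0 by rewrite /limit_var mulmxA.
rewrite Hgv Hlv.
have Hz' : (M - eps *: E) *m z = w^T by rewrite NE.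
have zb := pert_bound Mu e0 ec Hz'.
have zeq := pert_eq Mu Hz'.
have -> : l x x - (w *m z) 0 0 - (l x x - (w *m z0) 0 0) = (w *m (z0 - z)) 0 0.
  rewrite mulmxBr !mxE; ring.
have -> : z0 - z = - (eps *: (B *m z)).
  by rewrite {1}zeq /z0 /B opprD addrA subrr add0r.
rewrite mulmxN -scalemxAr mulmxA -/a mxE normrN mxE normrM gtr0_norm //.
rewrite mulrC; apply: ler_wpM2r; first exact: ltW.
apply: le_trans (row_bound _ _) _; apply: ler_wpM2l => //.
by apply: sumr_ge0 => j _.
Qed.
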